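(* Let $n,k$ be positive integers with $n\ge k$. Then $\mathrm{JS}_n^k(-1)$ is equal to the number of signed $k$-partitions of $[\pm n]_0$ whose zero-block is $\{0\}$.
   Context: $\mathrm{JS}_n^k(z)$ is defined by $\mathrm{JS}_0^0(z)=1$, $\mathrm{JS}_n^k(z)=0$ if $k\notin\{1,\dots,n\}$ (for $(n,k)\neq(0,0)$), and $\mathrm{JS}_n^k(z)=\mathrm{JS}_{n-1}^{k-1}(z)+k(k+z)\mathrm{JS}_{n-1}^k(z)$ for $n,k\ge1$. Let $[\pm n]_0=\{0,1,-1,\dots,n,-n\}$ and $[n]=\{1,\dots,n\}$. A signed $k$-partition of $[\pm n]_0$ is a set partition of $[\pm n]_0$ into $k+1$ nonempty blocks $B_0,B_1,\dots,B_k$ such that (1) $0\in B_0$ and for every $i\in[n]$, $\{i,-i\}\not\subset B_0$; (2) for every $j\in[k]$ and $i\in[n]$, $\{i,-i\}\subset B_j$ iff $i=\min(B_j\cap[n])$. $B_0$ is the zero-block. *)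

(* Defs.v *)
From mathcomp Require Import all_boot all_order all_algebra.
Set Implicit Arguments. Unset Strict Implicit. Unset Printing Implicit Defensive.
Import GRing.Theory Num.Theory.

Fixpoint JS (z : int) (n k : nat) : int :=
  match n with
  | 0 => if k == 0 then 1%R else 0%R
  | n'.+1 =>
      match k with
      | 0 => 0%R
      | k'.+1 => if n'.+1 < k then 0%R
                 else (JS z n' k' + (k%:Z * (k%:Z + z)) * JS z n' k)%R
      end
  end.

(* The set [+-n]_0 = {0, 1, -1, ..., n, -n}, encoded as a finite type:      *)
(*   None          <-> 0                                                     *)
(*   Some (i,true) <-> i+1      Some (i,false) <-> -(i+1)    (i : 'I_n)      *)
Definition pmset (n : nat) : finType := option ('I_n * bool).

Definition to_int n (x : pmset n) : int :=
  match x with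
  | None => 0
  | Some (i, true) => (i.+1)%:Z
  | Some (i, false) => (- (i.+1)%:Z)%R
  end.

Definition zero_el n : pmset n := None.
Definition pos_el n (j : 'I_n) : pmset n := Some (j, true).
Definition neg_el n (j : 'I_n) : pmset n := Some (j, false).

Definition minabs n (B : {set pmset n}) : nat :=
  \big[minn/n.+1]_(x in B) `|to_int x|%N.

Definition signed_kpart n k (P : {set {set pmset n}}) : bool :=
  let B0 := pblock P (zero_el n) in
  [&& partition P [set: pmset n],
      #|P| == k.+1,
      [forall j : 'I_n, ~~ ((pos_el j \in B0) && (neg_el j \in B0))] &
      [forall B in P, (B != B0) ==>
         [forall j : 'I_n,
            ((pos_el j \in B) && (neg_el j \in B)) == (j.+1 == minabs B)]]].

(* Main.v *)
Require Import Defs.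
From mathcomp Require Import all_boot all_order all_algebra zify.
Import GRing.Theory Num.Theory.
Set Implicit Arguments. Unset Strict Implicit.

Lemma absE n (y : 'I_n * bool) : `|to_int (Some y : pmset n)|%N = y.1.+1.
Proof. by case: y => j []. Qed.

Lemma abs_le n (x : pmset n) : (`|to_int x|%N <= n)%N.
Proof. by case: x => [[j []]|] //=; rewrite ?abszN /= ltn_ord. Qed.

Lemma bigmin_seq_le (T : eqType) (s : seq T) (P : pred T) (F : T -> nat) d x :
  x \in s -> P x -> (\big[minn/d]_(y <- s | P y) F y <= F x)%N.
Proof.
elim: s => // a s IH; rewrite inE big_cons => /orP[/eqP<- Px|xs Px].
  by rewrite Px geq_minl.
case: (P a); last exact: IH.
by rewrite geq_min IH ?orbT.
Qed.

Lemma minabs_le n (B : {set pmset n}) x : x \in B -> (minabs B <= `|to_int x|)%N.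
Proof. by move=> xB; apply: bigmin_seq_le => //; rewrite mem_index_enum. Qed.

Lemma minabs_ge n (B : {set pmset n}) m :
  (m <= n.+1)%N -> (forall y, y \in B -> m <= `|to_int y|)%N -> (m <= minabs B)%N.
Proof.
move=> mn H; rewrite /minabs; apply: (big_ind (fun v => m <= v)%N) => //.
  by move=> a b ha hb; rewrite leq_min ha hb.

Qed.

Lemma minabs_attained n (B : {set pmset n}) :
  B != set0 -> exists2 x, x \in B & minabs B = `|to_int x|%N.
Proof.
case/set0Pn=> x0 x0B.
have : (minabs B <= n)%N by apply: leq_trans (minabs_le x0B) (abs_le _).
rewrite /minabs; elim/big_rec: _ => [|y v yB IH]; first by rewrite ltnn.
case: (leqP `|to_int y|%N v) => h.
  by move=> _; exists y => //; apply/minn_idPl.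
by move=> hv; apply: IH.
Qed.

Lemma minabs_eq n (B : {set pmset n}) x :
  x \in B -> (forall y, y \in B -> `|to_int x| <= `|to_int y|)%N ->
  minabs B = `|to_int x|%N.
Proof.
move=> xB H; apply/eqP; rewrite eqn_leq minabs_le //= minabs_ge //.
exact: leq_trans (abs_le _) (leqnSn _).
Qed.
Definition code n := {ffun 'I_n * bool -> 'I_n}.
Definition lead n (f : code n) (j : 'I_n) : bool := f (j,true) == j.
Definition codeok n (f : code n) : bool :=
  [&& [forall j, lead f j == (f (j,false) == j)],
      [forall x, f (f x, true) == f x],
      [forall x, (f x <= x.1)%N] &
      [forall j, (f (j,true) == f (j,false)) ==> lead f j]].
Definition nlead n (f : code n) : nat := (\sum_(j < n) lead f j)%N.
Definition hh n (f : code n) (x : pmset n) : option 'I_n := omap f x.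
Definition Phi n (f : code n) : {set {set pmset n}} :=
  preim_partition (hh f) [set: pmset n].

Lemma card_nlead n (f : code n) : #|[set j | lead f j]| = nlead f.
Proof.
rewrite -sum1dep_card /nlead big_mkcond /=; apply: eq_bigr => j _.
by case: (lead f j).
Qed.

Lemma pblock_Phi n (f : code n) x :
  pblock (Phi f) x = [set y | hh f x == hh f y].
Proof.
have eqi : {in [set: pmset n] & &, equivalence_rel (fun x y => hh f x == hh f y)}.
  by move=> ? ? ? _ _ _; split=> // /eqP->.
apply/setP=> y; rewrite inE.
exact: (pblock_equivalence_partition eqi).
Qed.

Section Codeok.
Variables (n : nat) (f : code n).
Hypothesis fok : codeok f.

Lemma ok1 j : lead f j = (f (j,false) == j).
Proof. by case/and4P: fok => /forallP/(_ j)/eqP. Qed.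
Lemma ok2 x : f (f x, true) = f x.
Proof. by case/and4P: fok => _ /forallP/(_ x)/eqP. Qed.
Lemma ok3 x : (f x <= x.1)%N.
Proof. by case/and4P: fok => _ _ /forallP/(_ x). Qed.
Lemma ok4 j : f (j,true) = f (j,false) -> f (j, true) = j.
Proof. by case/and4P: fok => _ _ _ /forallP/(_ j)/implyP H /eqP/H/eqP. Qed.

Lemma minabs_Phi y :
  minabs (pblock (Phi f) (Some y)) = (f y).+1.
Proof.
rewrite pblock_Phi (@minabs_eq _ _ (Some (f y, true))) ?absE //.
  by rewrite inE /= ok2.
move=> [w|]; rewrite inE //= => /eqP [->]; rewrite absE /=.
exact: ok3.
Qed.

Lemma Phi_None : pblock (Phi f) None = [set None].
Proof. by apply/setP=> y; rewrite pblock_Phi !inE; case: y. Qed.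

Lemma Phi_card : #|Phi f| = (nlead f).+1.
Proof.
have -> : Phi f = (fun v => [set y | v == hh f y]) @: (hh f @: [set: pmset n]).
  rewrite /Phi /preim_partition /equivalence_partition -imset_comp.
  by apply: eq_imset => x; apply/setP => y; rewrite !inE.
rewrite card_in_imset; last first.
  move=> _ _ /imsetP[x _ ->] /imsetP[x' _ ->] /setP/(_ x).
  by rewrite !inE eqxx => /esym/eqP.
have -> : hh f @: [set: pmset n] = None |: (Some @: [set j | lead f j]).
  apply/setP=> v; apply/imsetP/setU1P.
    case=> [[y|] _ ->]; [right|by left].
    by apply: imset_f; rewrite inE /lead ok2.
  case=> [->|/imsetP[j]]; first by exists None.
  by rewrite inE /lead => /eqP fj ->; exists (pos_el j) => //; rewrite /hh /= fj.
rewrite (@cardsU1 _ None) card_imset; last exact: Some_inj.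
rewrite card_nlead; case: imsetP => // [[x _]] //.
Qed.

Lemma Phi_valid :
  signed_kpart (nlead f) (Phi f) && (pblock (Phi f) None == [set None]).
Proof.
rewrite Phi_None eqxx andbT /signed_kpart /zero_el Phi_None.
apply/and4P; split.
- exact: preim_partitionP.
- by rewrite Phi_card.
- by apply/forallP=> j; rewrite !inE.
apply/forallP=> B; apply/implyP=> /imsetP[x _ ->]; apply/implyP => hB.
case: x hB => [z|] hB; last first.
  by exfalso; move/negP: hB; apply; apply/eqP/setP=> y; rewrite !inE; case: y.
have minB : minabs [set y in [set: pmset n] | hh f (Some z) == hh f y] = (f z).+1.
  by rewrite -minabs_Phi pblock_Phi; congr minabs; apply/setP=> y; rewrite !inE.
rewrite minB; apply/forallP=> j; rewrite !inE /= eqSS.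
apply/eqP; apply/andP/eqP.
  case=> /eqP [e1] /eqP [e2]; rewrite e1 ok4 //; rewrite -e1 -e2 //.
move/val_inj=> ejz; rewrite ejz /hh /= ok2; split => //.
by have := ok1 (f z); rewrite /lead ok2 eqxx => /esym/eqP->.
Qed.

Lemma Psi_Phi_aux y : insubd y.1 (minabs (pblock (Phi f) (Some y))).-1 = f y.
Proof. by apply: val_inj; rewrite minabs_Phi /= val_insubd ltn_ord. Qed.

End Codeok.

Definition Psi n (P : {set {set pmset n}}) : code n :=
  [ffun y => insubd y.1 (minabs (pblock P (Some y))).-1].

Section PsiSec.
Variables (n k : nat) (P : {set {set pmset n}}).
Hypothesis Pok : signed_kpart k P.
Hypothesis P0 : pblock P None = [set None].

Let partP : partition P [set: pmset n].
Proof. by case/and4P: Pok. Qed.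
Let trivP : trivIset P.
Proof. by case/and3P: partP. Qed.
Let covP x : x \in cover P.
Proof. by case/and3P: partP => /eqP -> _ _; rewrite inE. Qed.
Let cardP : #|P| = k.+1.
Proof. by case/and4P: Pok => _ /eqP. Qed.
Let P4 B : B \in P -> B != pblock P None -> forall j : 'I_n,
   ((pos_el j \in B) && (neg_el j \in B)) = (j.+1 == minabs B).
Proof.
case/and4P: Pok => _ _ _ /forallP H BP BB0 j.
by have /implyP/(_ BP)/implyP/(_ BB0)/forallP/(_ j)/eqP := H B.
Qed.

Let BinP x : pblock P x \in P.
Proof. exact: pblock_mem. Qed.

Let notB0 y : pblock P (Some y) != pblock P None.
Proof.
rewrite P0; apply/negP => /eqP e.
by have := mem_pblock P (Some y); rewrite covP e inE.
Qed.

Lemma key y :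
  [/\ pos_el (Psi P y) \in pblock P (Some y),
      neg_el (Psi P y) \in pblock P (Some y) &
      minabs (pblock P (Some y)) = (Psi P y).+1].
Proof.
set B := pblock P (Some y).
have yB : Some y \in B by rewrite /B mem_pblock covP.
have Bn0 : B != set0 by apply/set0Pn; exists (Some y).
have [[[j b]|] xB mx] := minabs_attained Bn0; last first.
  by have := notB0 y; rewrite -/B (def_pblock trivP (BinP _) xB) eqxx.
rewrite absE /= in mx.
have e : Psi P y = j.
  by apply: val_inj; rewrite /Psi ffunE -/B mx val_insubd /= ltn_ord.
rewrite e mx; split => //.
  by have := P4 (BinP (Some y)) (notB0 y) j; rewrite -/B mx eqxx => /andP[].
by have := P4 (BinP (Some y)) (notB0 y) j; rewrite -/B mx eqxx => /andP[].
Qed.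

Lemma blk_pos y : pblock P (pos_el (Psi P y)) = pblock P (Some y).
Proof. by case: (key y) => h _ _; apply: same_pblock. Qed.
Lemma blk_neg y : pblock P (neg_el (Psi P y)) = pblock P (Some y).
Proof. by case: (key y) => _ h _; apply: same_pblock. Qed.

Lemma eqPsi y y' : (Psi P y == Psi P y') = (pblock P (Some y) == pblock P (Some y')).
Proof.
apply/eqP/eqP => [e|e]; first by rewrite -blk_pos e blk_pos.
case: (key y) => _ _; case: (key y') => _ _; rewrite e => -> [] h.
exact: val_inj.
Qed.

Lemma hh_eq x x' : (hh (Psi P) x == hh (Psi P) x') = (pblock P x == pblock P x').
Proof.
case: x => [y|]; case: x' => [y'|] //=; last by rewrite !eqxx.
- exact: eqPsi.
- by apply/esym/negP=> /eqP e; have := notB0 y; rewrite e eqxx.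
- by rewrite eq_sym; apply/esym/negP=> /eqP e; have := notB0 y'; rewrite e eqxx.
Qed.

Lemma Phi_Psi : Phi (Psi P) = P.
Proof.
rewrite -{2}(preim_partition_pblock partP) /Phi /preim_partition.
rewrite /equivalence_partition; apply: eq_imset => x; apply/setP => y.
by rewrite !inE hh_eq.
Qed.

Lemma Psi_ok : codeok (Psi P).
Proof.
apply/and4P; split.
- apply/forallP=> j; apply/eqP; apply/idP/idP => /eqP e.
    by rewrite -{2}e eqPsi; have := blk_neg (j,true); rewrite e /neg_el => ->.
  by rewrite /lead -{2}e eqPsi; have := blk_pos (j,false); rewrite e /pos_el => ->.
- by apply/forallP=> x; rewrite eqPsi blk_pos.
- apply/forallP=> x; case: (key x) => _ _ m.
  by have := @minabs_le _ (pblock P (Some x)) (Some x); rewrite mem_pblock covP => /(_ isT); rewrite m absE.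
apply/forallP=> j; apply/implyP; rewrite eqPsi => /eqP e.
have := P4 (BinP (pos_el j)) (notB0 _) j.
rewrite (mem_pblock P (pos_el j)) covP.
have -> : neg_el j \in pblock P (pos_el j) by rewrite /pos_el e mem_pblock covP.
case: (key (j,true)) => _ _ -> /esym /eqP [] h.
by rewrite /lead; apply/eqP/val_inj.
Qed.

Lemma Psi_nlead : nlead (Psi P) = k.
Proof. by have := Phi_card Psi_ok; rewrite Phi_Psi cardP => -[]. Qed.

End PsiSec.

Definition vcode n k (f : code n) : bool := codeok f && (nlead f == k).
Definition cnt n k := #|[set f : code n | vcode k f]|.

Lemma parts_card n k :
  #|[set P : {set {set pmset n}} |
       signed_kpart k P && (pblock P (zero_el n) == [set zero_el n])]| = cnt n k.
Proof.
have -> : [set P : {set {set pmset n}} |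
       signed_kpart k P && (pblock P (zero_el n) == [set zero_el n])]
     = (@Phi n) @: [set f | vcode k f].
  apply/setP=> P; rewrite inE; apply/idP/imsetP.
    case/andP=> Pok /eqP P0; exists (Psi P).
      by rewrite inE /vcode (Psi_ok Pok P0) (Psi_nlead Pok P0) eqxx.
    by rewrite (Phi_Psi Pok P0).
  case=> f; rewrite inE => /andP[fok /eqP <-] ->; exact: Phi_valid.
apply: card_in_imset => f g; rewrite !inE => /andP[fok _] /andP[gok _] e.
by apply/ffunP=> y; rewrite -(Psi_Phi_aux fok) -(Psi_Phi_aux gok) e.
Qed.

Definition wid n (j : 'I_n) : 'I_n.+1 := widen_ord (leqnSn n) j.
Definition ext n (g : code n) (a b : 'I_n.+1) : code n.+1 :=
  [ffun x => match (insub (val x.1) : option 'I_n) with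
             | Some j => wid (g (j, x.2))
             | None => if x.2 then a else b end].
Definition restr n (f : code n.+1) : code n :=
  [ffun y => insubd y.1 (val (f (wid y.1, y.2)))].

Lemma wid_inj n : injective (@wid n).
Proof. by move=> i j e; apply: val_inj; exact: (congr1 val e). Qed.

Lemma ordS_cases n (i : 'I_n.+1) : (exists j : 'I_n, i = wid j) \/ i = ord_max.
Proof.
case: (ltnP i n) => h; first by left; exists (Ordinal h); apply: val_inj.
by right; apply: val_inj => /=; apply/eqP; rewrite eqn_leq h -ltnS ltn_ord.
Qed.

Lemma wid_max n (j : 'I_n) : (wid j == ord_max) = false.
Proof. by apply/negbTE; rewrite -val_eqE /= neq_ltn ltn_ord. Qed.

Section Ext.
Variables (n : nat) (g : code n) (a b : 'I_n.+1).

Lemma ext_wid j c : ext g a b (wid j, c) = wid (g (j, c)).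
Proof.
rewrite ffunE /=; case: insubP => [j' _ e|]; last by rewrite /= ltn_ord.
by have -> : j' = j by apply: val_inj.
Qed.

Lemma ext_max c : ext g a b (ord_max, c) = if c then a else b.
Proof. by rewrite ffunE /=; case: insubP => // j; rewrite /= ltnn. Qed.

Lemma restr_ext : restr (ext g a b) = g.
Proof.
by apply/ffunP=> [[j c]]; apply: val_inj; rewrite ffunE ext_wid val_insubd /= ltn_ord.
Qed.

Lemma lead_ext_wid j : lead (ext g a b) (wid j) = lead g j.
Proof. by rewrite /lead ext_wid (inj_eq (@wid_inj n)). Qed.

Lemma nlead_ext : nlead (ext g a b) = nlead g + (a == ord_max).
Proof.
rewrite /nlead big_ord_recr /=; congr (_ + _).
  by apply: eq_bigr => j _; rewrite -lead_ext_wid.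
by rewrite /lead ext_max.
Qed.

Definition gl (x : 'I_n.+1) := [exists j, (x == wid j) && lead g j].

Lemma ext_ok : codeok (ext g a b) =
  codeok g && (((a == ord_max) && (b == ord_max)) || [&& gl a, gl b & a != b]).
Proof.
set F := ext g a b.
apply/idP/idP.
  case/and4P=> /forallP h1 /forallP h2 /forallP h3 /forallP h4.
  apply/andP; split.
    apply/and4P; split.
    - apply/forallP=> j; have := h1 (wid j).
      by rewrite lead_ext_wid ext_wid (inj_eq (@wid_inj n)).
    - apply/forallP=> [[j c]]; have := h2 (wid j, c).
      by rewrite ext_wid ext_wid (inj_eq (@wid_inj n)).
    - by apply/forallP=> [[j c]]; have := h3 (wid j, c); rewrite ext_wid.
    apply/forallP=> j; have := h4 (wid j).
    by rewrite !ext_wid (inj_eq (@wid_inj n)) lead_ext_wid.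
  have := h1 ord_max; rewrite /lead !ext_max => /eqP e.
  case: (boolP (a == ord_max)) => ha /=; first by rewrite -e ha.
  have hb : b != ord_max by rewrite -e.
  have gla : gl a.
    have := h2 (ord_max, true); rewrite ext_max.
    case: (ordS_cases a) => [[j ->]|]; last by move/eqP: ha.
    by rewrite ext_wid (inj_eq (@wid_inj n)) => hj; apply/existsP; exists j; rewrite eqxx.
  have glb : gl b.
    have := h2 (ord_max, false); rewrite ext_max.
    case: (ordS_cases b) => [[j ->]|]; last by move/eqP: hb.
    by rewrite ext_wid (inj_eq (@wid_inj n)) => hj; apply/existsP; exists j; rewrite eqxx.
  rewrite gla glb /=; apply: contra ha => /eqP eab.
  by have := h4 ord_max; rewrite /lead !ext_max eab eqxx.
case/andP=> gok cond.
have glw x : gl x -> exists2 j, x = wid j & lead g j.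
  by case/existsP=> j /andP[/eqP -> ?]; exists j.
apply/and4P; split.
- apply/forallP=> i; case: (ordS_cases i) => [[j ->]|->].
    by rewrite lead_ext_wid ext_wid (inj_eq (@wid_inj n)) (ok1 gok).
  rewrite /lead !ext_max; case/orP: cond => [/andP[/eqP-> /eqP->]|]; first by rewrite !eqxx.
  case/and3P=> /glw[j1 -> _] /glw[j2 -> _] _; by rewrite !wid_max.
- apply/forallP=> [[i c]]; case: (ordS_cases i) => [[j ->]|->].
    by rewrite !ext_wid (ok2 gok).
  rewrite ext_max; case/orP: cond => [/andP[/eqP ea /eqP eb]|].
    case: c; first by rewrite [X in (X, true)]ea ext_max.
    by rewrite [X in (X, true)]eb ext_max ea eb.
  case/and3P=> /glw[j1 -> l1] /glw[j2 -> l2] _.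
  by case: c; rewrite ext_wid (inj_eq (@wid_inj n)).
- apply/forallP=> [[i c]]; case: (ordS_cases i) => [[j ->]|->].
    by rewrite ext_wid /=; apply: (ok3 gok (j,c)).
  by rewrite ext_max /= -ltnS ltn_ord.
apply/forallP=> i; case: (ordS_cases i) => [[j ->]|->].
  by rewrite !ext_wid (inj_eq (@wid_inj n)) lead_ext_wid; apply/implyP=> /eqP /(ok4 gok) /eqP.
rewrite /lead !ext_max; case/orP: cond => [/andP[/eqP-> /eqP->]|]; first by rewrite !eqxx.
by case/and3P=> _ _ /negbTE ->.
Qed.

End Ext.

Lemma ext_restr n (f : code n.+1) : codeok f ->
  f = ext (restr f) (f (ord_max, true)) (f (ord_max, false)).
Proof.
move=> fok; apply/ffunP=> [[i c]]; case: (ordS_cases i) => [[j ->]|->].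
  rewrite ext_wid; apply: val_inj => /=; rewrite ffunE val_insubd /=.
  by rewrite (leq_ltn_trans (ok3 fok (wid j, c))) //= ltn_ord.
by rewrite ext_max; case: c.
Qed.

Lemma card_sum_nat (T : finType) (P : pred T) : #|[set x | P x]| = (\sum_x (P x : nat))%N.
Proof.
rewrite -sum1dep_card big_mkcond /=; apply: eq_bigr => x _; by case: (P x).
Qed.

Lemma gl_max n (g : code n) : gl g ord_max = false.
Proof. by apply/existsP=> -[j /andP[/eqP e _]]; have := wid_max j; rewrite -e eqxx. Qed.

Lemma card_gl n (g : code n) : #|[set a | gl g a]| = nlead g.
Proof.
have -> : [set a | gl g a] = (@wid n) @: [set j | lead g j].
  apply/setP=> a; rewrite inE; apply/existsP/imsetP.
    by case=> j /andP[/eqP -> l]; exists j; rewrite ?inE.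
  by case=> j; rewrite inE => l ->; exists j; rewrite eqxx.
by rewrite card_imset ?card_nlead //; apply: wid_inj.
Qed.

Lemma pairs_card n (g : code n) :
  (\sum_(q : 'I_n.+1 * 'I_n.+1) ([&& gl g q.1, gl g q.2 & q.1 != q.2] : nat))%N
  = (nlead g * (nlead g).-1)%N.
Proof.
rewrite -(pair_bigA addn (fun a b => ([&& gl g a, gl g b & a != b] : nat))) /=.
have H a : (\sum_b ([&& gl g a, gl g b & a != b] : nat))%N = (gl g a * (nlead g).-1)%N.
  case: (boolP (gl g a)) => ha /=; last by rewrite big1.
  rewrite mul1n -card_gl (cardsD1 a) inE ha add1n /=.
  rewrite (eq_bigr (fun b => (gl g b && (b != a) : nat))); last first.
    by move=> b _; rewrite eq_sym.
  by rewrite -(card_sum_nat (fun b => gl g b && (b != a))); apply: eq_card => b; rewrite !inE andbC.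
rewrite (eq_bigr _ (fun a _ => H a)) -big_distrl /= -card_sum_nat card_gl.
by [].
Qed.

Lemma vcode_ext n k' (g : code n) (q : 'I_n.+1 * 'I_n.+1) :
  (vcode k' (ext g q.1 q.2) : nat) =
  (codeok g * ((q == (ord_max, ord_max)) * ((nlead g).+1 == k')
    + [&& gl g q.1, gl g q.2 & q.1 != q.2] * (nlead g == k')))%N.
Proof.
case: q => a b /=; rewrite /vcode ext_ok nlead_ext.
case: (codeok g) => //=.
case: (boolP (a == ord_max)) => [/eqP ->|ha] /=.
  rewrite gl_max /= orbF mul0n addn0 mul1n addn1 xpair_eqE eqxx /=.
  by case: (b == ord_max); case: (_ == k').
rewrite mul1n xpair_eqE (negbTE ha) /= addn0.
by case: [&& gl g a, gl g b & a != b]; case: (_ == k').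
Qed.

Lemma cnt_rec n k' :
  cnt n.+1 k' = (\sum_(g : code n)
     (codeok g * (((nlead g).+1 == k') + (nlead g == k') * (nlead g * (nlead g).-1))))%N.
Proof.
rewrite /cnt.
have -> : [set f : code n.+1 | vcode k' f] =
    (fun p : code n * ('I_n.+1 * 'I_n.+1) => ext p.1 p.2.1 p.2.2)
      @: [set p | vcode k' (ext p.1 p.2.1 p.2.2)].
  apply/setP=> f; rewrite inE; apply/idP/imsetP.
    move=> vf; have fok : codeok f by case/andP: vf.
    exists (restr f, (f (ord_max,true), f (ord_max,false))); last exact: ext_restr.
    by rewrite inE /= -ext_restr.
  by case=> p; rewrite inE => ? ->.
rewrite card_in_imset; last first.
  move=> [g [a b]] [g' [a' b']] _ _ /= e.
  have := congr1 (@restr n) e; rewrite !restr_ext => ->.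
  have := congr1 (fun F : code n.+1 => F (ord_max, true)) e; rewrite /= !ext_max => ->.
  by have := congr1 (fun F : code n.+1 => F (ord_max, false)) e; rewrite /= !ext_max => ->.
rewrite card_sum_nat.
rewrite -(pair_bigA addn (fun g q => (vcode k' (ext g q.1 q.2) : nat))) /=.
apply: eq_bigr => g _.
rewrite (eq_bigr _ (fun q _ => vcode_ext k' g q)) -big_distrr /=; congr (_ * _)%N.
rewrite big_split /= -!big_distrl /= pairs_card; congr (_ + _)%N.
  rewrite (bigD1 (ord_max, ord_max)) //= eqxx big1 ?addn0 ?mul1n //.
  by move=> q /negbTE ->.
by rewrite mulnC.
Qed.

Lemma cnt_sum n k : cnt n k = (\sum_(g : code n) (vcode k g : nat))%N.
Proof. exact: card_sum_nat. Qed.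

Lemma nlead_le n (f : code n) : (nlead f <= n)%N.
Proof.
rewrite /nlead -[n in (_ <= n)%N]card_ord -sum1_card; apply: leq_sum => j _.
by case: (lead f j).
Qed.

Lemma cnt_big n k : (n < k)%N -> cnt n k = 0%N.
Proof.
move=> h; rewrite cnt_sum big1 // => g _; rewrite /vcode.
by case: (nlead g =P k) (nlead_le g) => [->|]; [rewrite leqNgt h | rewrite andbF].
Qed.

Lemma cnt0 k : cnt 0 k = (k == 0%N).
Proof.
rewrite cnt_sum.
have ok (g : code 0) : codeok g.
  by apply/and4P; split; apply/forallP => -[[]].
have nl (g : code 0) : nlead g = 0%N by rewrite /nlead big_ord0.
rewrite (eq_bigr (fun _ => (k == 0%N) : nat)); last first.
  by move=> g _; rewrite /vcode ok nl eq_sym.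
by rewrite sum_nat_const card_ffun card_ord card_prod card_ord /= mul1n.
Qed.

Lemma cnt_S0 n : cnt n.+1 0 = 0%N.
Proof.
rewrite cnt_rec big1 // => g _.
by case: (nlead g) => [|m]; rewrite ?muln0 ?mul0n.
Qed.

Lemma cnt_SS n k : cnt n.+1 k.+1 = (cnt n k + k.+1 * k * cnt n k.+1)%N.
Proof.
rewrite cnt_rec !cnt_sum (mulnC _ (\sum_g _)%N) big_distrl /= -big_split /=.
apply: eq_bigr => g _; rewrite /vcode eqSS.
case: (codeok g) => //=; rewrite mul1n.
case: (nlead g =P k.+1) => [->|_] /=; first by rewrite mulnC eqn_leq ltnn.
by congr (_ + _).
Qed.

Lemma JS_cnt n k : JS (-1)%R n k = Posz (cnt n k).
Proof.
elim: n k => [|n IH] [|k].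
- by rewrite cnt0.
- by rewrite cnt0.
- by rewrite cnt_S0.
rewrite /=; case: ltnP => h.
  by rewrite cnt_big.
rewrite !IH cnt_SS PoszD PoszM.
have -> : (Posz k.+1 + -1)%R = Posz k by rewrite -addn1 PoszD addrK.
by rewrite -!PoszM.
Qed.

Theorem corollary7 (n k : nat) :
  (0 < k)%N -> (k <= n)%N ->
  JS (-1)%R n k =
  Posz (#|[set P : {set {set pmset n}} |
       signed_kpart k P && (pblock P (zero_el n) == [set zero_el n])]|).
Proof. by move=> _ _; rewrite parts_card JS_cnt. Qed.
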